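(* Let $G=(X,\Sigma,\longrightarrow,X_0)$ and $R=(Z,\Sigma,\longrightarrow,Z_0)$ be automata. (1) $\mathit{SPR}(G,R)\neq\emptyset$ iff there exists $W_0\in E^{\uparrow}_{(G,R)}$ such that $\forall x_0\in X_0\,\exists z_0\in Z_0\,((x_0,z_0)\in W_0)$. (2) If $\mathit{SPR}(G,R)\neq\emptyset$, then $E^{\uparrow}_{(G,R)}=\bigcup_{W\in E^{\uparrow}_{(G,R)}}\wp(W)$.
   Context: An automaton is a 4-tuple $A=(Q,\Sigma,\longrightarrow,Q_0)$ with state set $Q$, finite event set $\Sigma$, ${\longrightarrow}\subseteq Q\times\Sigma\times Q$ and $\emptyset\neq Q_0\subseteq Q$. Write $q\xrightarrow{\sigma}q'$ for $(q,\sigma,q')\in{\longrightarrow}$, $q\xrightarrow{\sigma}$ if some such $q'$ exists; extend to strings. A state is reachable if reached from an initial state by some string. Events are partitioned into uncontrollable $\Sigma_{uc}$ and controllable $\Sigma_c$; $\Sigma_r\subseteq\Sigma$ is a fixed set of required events. For a supervisor $S=(Y,\Sigma,\longrightarrow,Y_0)$, $S\|G=(Y\times X,\Sigma,\longrightarrow,Y_0\times X_0)$ with $(y,x)\xrightarrow{\sigma}(y',x')$ iff $y\xrightarrow{\sigma}y'$ and $x\xrightarrow{\sigma}x'$; $S$ is $\Sigma_{uc}$-admissible w.r.t. $G$ if for every reachable $(y,x)$ of $S\|G$ and $\sigma\in\Sigma_{uc}$, $x\xrightarrow{\sigma}$ implies $(y,x)\xrightarrow{\sigma}$. For automata $A_1,A_2$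 (state sets $Q_1,Q_2$, initial sets $Q_{01},Q_{02}$), $\Phi\subseteq Q_1\times Q_2$ is a cc-simulation if (initial state) every $q_0\in Q_{01}$ has $p_0\in Q_{02}$ with $(q_0,p_0)\in\Phi$; (forward) for $(q,p)\in\Phi$, $\sigma\in\Sigma$, $q\xrightarrow{\sigma}q'$ there is $p'$ with $p\xrightarrow{\sigma}p'$, $(q',p')\in\Phi$; ($\Sigma_r$-backward) for $(q,p)\in\Phi$, $\sigma\in\Sigma_r$, $p\xrightarrow{\sigma}p'$ there is $q'$ with $q\xrightarrow{\sigma}q'$, $(q',p')\in\Phi$. $A_1\sqsubseteq_{cc}A_2$ means one exists. $\mathit{SPR}(G,R)$ is the set of $\Sigma_{uc}$-admissible supervisors $S$ with $S\|G\sqsubseteq_{cc}R$. For $W,W'\subseteq X\times Z$: $\mathit{match}_{G,R}(W,\sigma,W')$ iff for all $(x,z)\in W$ and $x\xrightarrow{\sigma}x'$ there is $z'$ with $z\xrightarrow{\sigma}z'$ and $(x',z')\in W'$. $F_{(G,R)}:\wp(\wp(X\times Z))\to\wp(\wp(X\times Z))$ is defined by: $W\in F_{(G,R)}(E)$ iff $W\in E$ and (1) for every $\sigma\in\Sigma_{uc}$ there is $W'\in E$ with $\mathit{match}_{G,R}(W,\sigma,W')$, and (2) for every $(x,z)\in W$, $\sigma\in\Sigma_r$, $z'$ with $z\xrightarrow{\sigma}z'$ there exist $x'\in X$, $W'\in E$ with $x\xrightarrow{\sigma}x'$, $(x',z')\in W'$ and $\mathit{match}_{G,R}(W,\sigma,W')$.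 $F_{(G,R)}$ is monotone w.r.t. $\subseteq$, and $E^{\uparrow}_{(G,R)}$ denotes its greatest fixpoint. *)

(* Defs.v *)
From mathcomp Require Import all_boot.
Unset Implicit Arguments.
Unset Strict Implicit.
Unset Printing Implicit Defensive.

Record automaton (Sigma : Type) : Type := Automaton {
  state : Type;
  trans : state -> Sigma -> state -> Prop;
  init : state -> Prop;
  init_nonempty : exists q, init q
}.
Arguments state {Sigma} a.
Arguments trans {Sigma} a _ _ _.
Arguments init {Sigma} a _.
Arguments init_nonempty {Sigma} a.

Section Defs.
Variable Sigma : Type.

Inductive reachable (A : automaton Sigma) : state A -> Prop :=
| reach_init q : init A q -> reachable A q
| reach_step q s q' : reachable A q -> trans A q s q' -> reachable A q'.

Lemma sync_init_nonempty (S G : automaton Sigma) :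
  exists p : state S * state G, init S p.1 /\ init G p.2.
Proof.
case: (init_nonempty S) => y Hy; case: (init_nonempty G) => x Hx.
by exists (y, x).
Qed.

Definition sync (S G : automaton Sigma) : automaton Sigma :=
  @Automaton Sigma (state S * state G)
    (fun p s p' => trans S p.1 s p'.1 /\ trans G p.2 s p'.2)
    (fun p => init S p.1 /\ init G p.2)
    (sync_init_nonempty S G).

Definition admissible (uc : Sigma -> bool) (S G : automaton Sigma) : Prop :=
  forall (y : state S) (x : state G), reachable (sync S G) (y, x) ->
  forall s, uc s -> (exists x', trans G x s x') ->
  exists p', trans (sync S G) (y, x) s p'.

Definition cc_simulation (req : Sigma -> bool) (A1 A2 : automaton Sigma)
  (Phi : state A1 -> state A2 -> Prop) : Prop :=
  (forall q0, init A1 q0 -> exists p0, init A2 p0 /\ Phi q0 p0) /\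
  (forall q p, Phi q p -> forall s q', trans A1 q s q' ->
     exists p', trans A2 p s p' /\ Phi q' p') /\
  (forall q p, Phi q p -> forall s, req s -> forall p', trans A2 p s p' ->
     exists q', trans A1 q s q' /\ Phi q' p').

Definition cc_le (req : Sigma -> bool) (A1 A2 : automaton Sigma) : Prop :=
  exists Phi, cc_simulation req A1 A2 Phi.

Definition SPR (uc req : Sigma -> bool) (G R : automaton Sigma)
  (S : automaton Sigma) : Prop :=
  admissible uc S G /\ cc_le req (sync S G) R.

Definition SPR_nonempty (uc req : Sigma -> bool) (G R : automaton Sigma) : Prop :=
  exists S : automaton Sigma, SPR uc req G R S.

Definition match_GR (G R : automaton Sigma)
  (W : state G * state R -> Prop) (s : Sigma)
  (W' : state G * state R -> Prop) : Prop :=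
  forall x z, W (x, z) -> forall x', trans G x s x' ->
  exists z', trans R z s z' /\ W' (x', z').

Definition F_GR (uc req : Sigma -> bool) (G R : automaton Sigma)
  (E : (state G * state R -> Prop) -> Prop)
  (W : state G * state R -> Prop) : Prop :=
  E W /\
  (forall s, uc s -> exists W', E W' /\ match_GR G R W s W') /\
  (forall x z, W (x, z) -> forall s, req s -> forall z', trans R z s z' ->
     exists x' W', trans G x s x' /\ E W' /\ W' (x', z') /\ match_GR G R W s W').

(* Greatest fixpoint of the monotone operator F_{(G,R)} (Knaster-Tarski:
   union of all post-fixpoints E with E \subseteq F(E)). *)
Definition Eup (uc req : Sigma -> bool) (G R : automaton Sigma)
  (W : state G * state R -> Prop) : Prop :=
  exists E : (state G * state R -> Prop) -> Prop,
    (forall V, E V -> F_GR uc req G R E V) /\ E W.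

End Defs.

Arguments reachable {Sigma} A _.
Arguments sync {Sigma} S G.
Arguments admissible {Sigma} uc S G.
Arguments cc_simulation {Sigma} req A1 A2 Phi.
Arguments cc_le {Sigma} req A1 A2.
Arguments SPR {Sigma} uc req G R S.
Arguments SPR_nonempty {Sigma} uc req G R.
Arguments match_GR {Sigma} G R W s W'.
Arguments F_GR {Sigma} uc req G R E W.
Arguments Eup {Sigma} uc req G R W.

(* Main.v *)
Require Import Defs.
From mathcomp Require Import all_boot.
From Stdlib Require Import Classical.

Section Aux.
Variable Sigma : Type.
Variables (G R : automaton Sigma).
Variable E : (state G * state R -> Prop) -> Prop.
Variables (W0 : state G * state R -> Prop) (HW0 : E W0).

Definition supAut : automaton Sigma :=
  @Automaton Sigma {W | E W}
    (fun w s w' => match_GR G R (proj1_sig w) s (proj1_sig w'))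
    (fun w => proj1_sig w = W0)
    (ex_intro _ (exist _ W0 HW0) erefl).
End Aux.
Arguments supAut {Sigma} G R E W0 HW0.

Lemma down_closed (Sigma : Type) (uc req : Sigma -> bool) (G R : automaton Sigma)
  (V W : state G * state R -> Prop) :
  Eup uc req G R W -> (forall p, V p -> W p) -> Eup uc req G R V.
Proof.
move=> [E [HE HW]] HVW.
exists (fun V' => exists W, E W /\ (forall p, V' p -> W p)).
split; last by exists W.
move=> V' [W1 [HW1 Hsub]].
have [_ [H1 H2]] := HE W1 HW1.
split; first by exists W1.
split.
- move=> s Hs. have [W' [HW' Hm]] := H1 s Hs.
  exists W'; split; first by exists W'.
  move=> x z Hxz x' Hx'. exact: Hm _ _ (Hsub _ Hxz) _ Hx'.
- move=> x z Hxz s Hs z' Hz'.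
  have [x' [W' [Hx' [HW' [Hin Hm]]]]] := H2 x z (Hsub _ Hxz) s Hs z' Hz'.
  exists x', W'. split=>//. split; first by exists W'.
  split=>//. move=> x1 z1 H1z x1' Hx1'. exact: Hm _ _ (Hsub _ H1z) _ Hx1'.
Qed.

Theorem corollary2 (Sigma : finType) (uc req : pred Sigma)
  (G R : automaton Sigma) :
  (SPR_nonempty uc req G R <->
     exists W0, Eup uc req G R W0 /\
       (forall x0, init G x0 -> exists z0, init R z0 /\ W0 (x0, z0))) /\
  (SPR_nonempty uc req G R ->
     forall V : state G * state R -> Prop,
       Eup uc req G R V <->
       exists W, Eup uc req G R W /\ (forall p, V p -> W p)).
Proof.
split; last first.
  move=> _ V; split; first by move=> H; exists V.
  by move=> [W [HW Hs]]; exact: down_closed HW Hs.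
split.
- move=> [S [Hadm [Phi [Hi [Hf Hb]]]]].
  have [y0 Hy0] := init_nonempty S.
  pose Wy := fun (y : state S) (p : state G * state R) =>
    reachable (sync S G) (y, p.1) /\ Phi (y, p.1) p.2.
  exists (Wy y0). split.
  + exists (fun W => exists y, W = Wy y). split; last by exists y0.
    move=> V [y ->]. split; first by exists y. split.
    * move=> s Hs. case: (classic (exists y', trans S y s y')) => [[y' Hy']|Hn].
      - exists (Wy y'); split; first by exists y'.
        move=> x z [Hr Hp] x' Hx'.
        have Ht : trans (sync S G) (y, x) s (y', x') by split.
        have [z' [Hz' Hp']] := Hf _ _ Hp s _ Ht.
        exists z'; split=>//; split=>//. exact: reach_step Hr Ht.
      - exists (Wy y); split; first by exists y.
        move=> x z [Hr Hp] x' Hx'.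
        have [[y' x''] [Ht1 Ht2]] := Hadm y x Hr s Hs (ex_intro _ x' Hx').
        exfalso; apply: Hn; exists y'; exact: Ht1.
    * move=> x z [Hr Hp] s Hs z' Hz'.
      have [[y' x'] [[Ht1 Ht2] Hp']] := Hb _ _ Hp s Hs z' Hz'.
      have Ht : trans (sync S G) (y, x) s (y', x') by split.
      exists x', (Wy y'). split=>//. split; first by exists y'.
      split. split=>//. exact: reach_step Hr Ht.
      move=> x1 z1 [Hr1 Hp1] x1' Hx1'.
      have Ht' : trans (sync S G) (y, x1) s (y', x1') by split.
      have [z1' [Hz1' Hp1']] := Hf _ _ Hp1 s _ Ht'.
      exists z1'; split=>//; split=>//. exact: reach_step Hr1 Ht'.
  + move=> x0 Hx0.
    have Hi0 : init (sync S G) (y0, x0) by split.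
    have [z0 [Hz0 Hp]] := Hi _ Hi0.
    exists z0; split=>//; split=>//. exact: reach_init.
- move=> [W0 [[E [HE HW0]] Hinit]].
  exists (supAut G R E W0 HW0). split.
  + move=> [W HW] x _ s Hs [x' Hx'].
    have [_ [H1 _]] := HE W HW.
    have [W' [HW' Hm]] := H1 s Hs.
    by exists (exist _ W' HW', x').
  + exists (fun (p : state (sync (supAut G R E W0 HW0) G)) z => proj1_sig p.1 (p.2, z)).
    split; [|split].
    * move=> [[W HW] x0] [/= HWeq Hx0]. subst W.
      have [z0 [? ?]] := Hinit x0 Hx0. by exists z0.
    * move=> [[W HW] x] z /= Hp s [[W' HW'] x'] [/= Hm Hx'].
      exact: Hm _ _ Hp _ Hx'.
    * move=> [[W HW] x] z /= Hp s Hs z' Hz'.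
      have [_ [_ H2]] := HE W HW.
      have [x' [W' [Hx' [HW' [Hin Hm]]]]] := H2 x z Hp s Hs z' Hz'.
      by exists (exist _ W' HW', x').
Qed.
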